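(* Let $A\in\mathbb{R}_{\max}^{n\times n}$ with $\lambda(A)=0$, let $g=g(\mathrm{crit}(A))\ge2$, assume $(n,g)\ne(2,2)$, $T_1(A)=\mathrm{DM}(g,n)$, and that $\mathrm{crit}(A)$ contains, up to choice of first node, a unique cycle $Z_0$ of length $g$. Let $W_0$ be an interesting walk, and renumber the nodes so that $1,\dots,g$ are the nodes of $Z_0$ and $W_0=(g+1)\cdots n\,(1\cdots n)^g$. Then $\mathcal{D}(A)$ has, up to the choice of its first node, a unique Hamiltonian cycle of maximal weight among all Hamiltonian cycles, and it is the cycle $(1,2,\dots,n,1)$.
   Context: Max-plus semiring $\mathbb{R}_{\max}=\mathbb{R}\cup\{-\infty\}$ with $a\oplus b=\max(a,b)$, $a\otimes b=a+b$; $(AB)_{ij}=\max_k(a_{ik}+b_{kj})$; $A^t$ is the $t$-th max-plus power, $A^0=I$. $\mathcal{D}(A)$ is the digraph on $\{1,\dots,n\}$ with arc $(i,j)$ of weight $a_{ij}$ whenever $a_{ij}\ne-\infty$. A walk is a node sequence whose consecutive pairs are arcs, its length is its number of arcs and its weight the sum of its arc weights; cycles are closed walks with no proper closed subwalk; a Hamiltonian cycle visits every node. $\lambda(A)$ is the maximal cycle mean. $\mathrm{crit}(A)$ is the subgraph of all nodes and arcs of cycles attaining $\lambda(A)$; its nodes are critical. $g(\mathrm{crit}(A))$ is the maximum over strongly connected components of $\mathrm{crit}(A)$ of their minimal cycle length. The cyclicity of $\mathrm{crit}(A)$ is the lcm over components of the gcd of their cycle lengths. CSR terms: with $\gamma$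 the cyclicity of $\mathrm{crit}(A)$ and $\lambda(A)=0$, $M=I\oplus N\oplus\dots\oplus N^{n-1}$ where $N=A^\gamma$: $c_{ij}=m_{ij}$ if $j$ critical, else $-\infty$; $r_{ij}=m_{ij}$ if $i$ critical, else $-\infty$; $s_{ij}=a_{ij}$ if $(i,j)$ is an arc of $\mathrm{crit}(A)$, else $-\infty$; $CS^tR[A]$ is the product $CS^tR$. $B_N$ has $(B_N)_{ij}=-\infty$ if $i$ or $j$ is critical and $a_{ij}$ otherwise. $T_1(A)$ is the least $T\ge0$ with $A^t=CS^tR[A]\oplus B_N^t$ for all $t\ge T$. $\mathrm{DM}(g,n)=g(n-2)+n$. Twice optimal / interesting walks: a walk $W$ from $i$ to $j$ passing through at least one node of $Z_0$ is twice optimal if it has maximal weight among all walks from $i$ to $j$ passing through a node of $Z_0$ whose length is congruent to the length of $W$ modulo $g$, and has minimal length among all such walks of maximal weight. It is interesting if it is twice optimal and has length $\mathrm{DM}(g,n)+g-1$. *)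

(* Defs.v *)
(* Max-plus matrices over an arbitrary real field R
   (the paper uses R = the real numbers). *)
From HB Require Import structures.
From mathcomp Require Import all_boot all_order all_algebra.
From Stdlib Require Import ClassicalEpsilon.
Set Implicit Arguments. Unset Strict Implicit. Unset Printing Implicit Defensive.
Import Order.TTheory GRing.Theory Num.Theory.
Local Open Scope ring_scope.

Definition pb (P : Prop) : bool :=
  if excluded_middle_informative P then true else false.

Section MaxPlus.
Variable R : realFieldType.

(* R_max = R u {-oo}; None stands for -oo *)
Definition mp_max (a b : option R) : option R :=
  match a, b with
  | None, _ => b
  | _, None => a
  | Some x, Some y => Some (Num.max x y)
  end.
Definition mp_plus (a b : option R) : option R :=
  match a, b with Some x, Some y => Some (x + y) | _, _ => None end.

Variable n : nat.
Definition mpmx := 'I_n -> 'I_n -> option R.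

Definition mp_mul (A B : mpmx) : mpmx :=
  fun i j => \big[mp_max/None]_(k < n) mp_plus (A i k) (B k j).
Definition mp_oplus (A B : mpmx) : mpmx := fun i j => mp_max (A i j) (B i j).
Definition mp_id : mpmx := fun i j => if i == j then Some 0 else None.
Definition mp_pow (A : mpmx) (t : nat) : mpmx := iter t (fun M => mp_mul M A) mp_id.

Definition arcA (A : mpmx) : rel 'I_n := fun i j => A i j != None.

Definition is_walk (e : rel 'I_n) (s : seq 'I_n) : bool :=
  if s is x :: s' then path e x s' else false.
Definition wlen (s : seq 'I_n) : nat := (size s).-1.
Fixpoint wweight (A : mpmx) (s : seq 'I_n) : R :=
  match s with
  | x :: ((y :: _) as s') => odflt 0 (A x y) + wweight A s'
  | _ => 0
  end.
Definition olast (s : seq 'I_n) : option 'I_n := ohead (rev s).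
Definition warcs (s : seq 'I_n) : seq ('I_n * 'I_n) := zip s (behead s).

Definition is_closed_walk (e : rel 'I_n) (s : seq 'I_n) : bool :=
  is_walk e s && (0 < wlen s)%N && (ohead s == olast s).
(* cycle: closed walk with no proper closed subwalk *)
Definition is_cycle (e : rel 'I_n) (s : seq 'I_n) : Prop :=
  is_closed_walk e s /\
  forall (x0 : 'I_n) (a b : nat), (a < b)%N -> (b <= wlen s)%N ->
    (a, b) != (0%N, wlen s) -> nth x0 s a != nth x0 s b.
(* two cycles are equal up to the choice of the first node *)
Definition same_cycle (c1 c2 : seq 'I_n) : Prop :=
  exists k, rot k (behead c1) = behead c2.

Definition cmean (A : mpmx) (c : seq 'I_n) : R := wweight A c / (wlen c)%:R.

Definition max_cycle_mean_is (A : mpmx) (l : R) : Prop :=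
  (exists c, is_cycle (arcA A) c /\ cmean A c = l) /\
  (forall c, is_cycle (arcA A) c -> cmean A c <= l).

Definition crit_cycle (A : mpmx) (c : seq 'I_n) : Prop :=
  is_cycle (arcA A) c /\ forall c', is_cycle (arcA A) c' -> cmean A c' <= cmean A c.
Definition crit_node (A : mpmx) (i : 'I_n) : Prop :=
  exists c, crit_cycle A c /\ i \in c.
Definition crit_arc (A : mpmx) (i j : 'I_n) : Prop :=
  exists c, crit_cycle A c /\ (i, j) \in warcs c.
Definition critrel (A : mpmx) : rel 'I_n := fun i j => pb (crit_arc A i j).

Definition crit_scc (A : mpmx) (i j : 'I_n) : bool :=
  connect (critrel A) i j && connect (critrel A) j i.
Definition comp_cycle_len (A : mpmx) (i : 'I_n) (k : nat) : bool :=
  pb (exists c, is_cycle (critrel A) c /\ wlen c = k /\ all (crit_scc A i) c).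
(* minimal cycle length of the s.c.c. of the critical node i
   (cycle lengths are at most n, so the default n is never the answer
    unless it is attained) *)
Definition comp_min_len (A : mpmx) (i : 'I_n) : nat :=
  \big[minn/n]_(k < n.+1 | comp_cycle_len A i k) k.
Definition comp_gcd_len (A : mpmx) (i : 'I_n) : nat :=
  \big[gcdn/0%N]_(k < n.+1 | comp_cycle_len A i k) k.

Definition gcrit (A : mpmx) : nat :=
  \big[maxn/0%N]_(i < n | pb (crit_node A i)) comp_min_len A i.
Definition cyclicity (A : mpmx) : nat :=
  \big[lcmn/1%N]_(i < n | pb (crit_node A i)) comp_gcd_len A i.

Definition csrM (A : mpmx) : mpmx :=
  fun i j => \big[mp_max/None]_(k < n) mp_pow (mp_pow A (cyclicity A)) k i j.
Definition csrC (A : mpmx) : mpmx :=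
  fun i j => if pb (crit_node A j) then csrM A i j else None.
Definition csrR (A : mpmx) : mpmx :=
  fun i j => if pb (crit_node A i) then csrM A i j else None.
Definition csrS (A : mpmx) : mpmx :=
  fun i j => if pb (crit_arc A i j) then A i j else None.
Definition CSR (A : mpmx) (t : nat) : mpmx :=
  mp_mul (mp_mul (csrC A) (mp_pow (csrS A) t)) (csrR A).
Definition BN (A : mpmx) : mpmx :=
  fun i j => if pb (crit_node A i) || pb (crit_node A j) then None else A i j.

Definition CSR_from (A : mpmx) (T : nat) : Prop :=
  forall t, (T <= t)%N -> forall i j,
    mp_pow A t i j = mp_oplus (CSR A t) (mp_pow (BN A) t) i j.
Definition T1_is (A : mpmx) (D : nat) : Prop :=
  CSR_from A D /\ forall T, (T < D)%N -> ~ CSR_from A T.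

Definition DM (g m : nat) : nat := (g * (m - 2) + m)%N.

Definition through (Z0 W : seq 'I_n) : bool := has (fun x => x \in Z0) W.

Definition twice_optimal (A : mpmx) (g : nat) (Z0 W : seq 'I_n) : Prop :=
  [/\ is_walk (arcA A) W, through Z0 W,
      (forall V, is_walk (arcA A) V -> ohead V = ohead W -> olast V = olast W ->
         through Z0 V -> wlen V = wlen W %[mod g] -> wweight A V <= wweight A W) &
      (forall V, is_walk (arcA A) V -> ohead V = ohead W -> olast V = olast W ->
         through Z0 V -> wlen V = wlen W %[mod g] -> wweight A V = wweight A W ->
         (wlen W <= wlen V)%N)].

Definition interesting (A : mpmx) (g : nat) (Z0 W : seq 'I_n) : Prop :=
  twice_optimal A g Z0 W /\ wlen W = (DM g n + g - 1)%N.

Definition is_hamiltonian (A : mpmx) (c : seq 'I_n) : Prop :=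
  is_cycle (arcA A) c /\ forall x : 'I_n, x \in c.

End MaxPlus.

(* Main.v *)
Require Import Defs.
From HB Require Import structures.
From mathcomp Require Import all_boot all_order all_algebra.
From mathcomp Require Import zify ring lra.
Import Order.TTheory GRing.Theory Num.Theory.
Local Open Scope ring_scope.

Module Aux.
Set Implicit Arguments. Unset Strict Implicit. Unset Printing Implicit Defensive.

Section Aux.
Variable R : realFieldType.
Variable n : nat.
Variable A : mpmx R n.
Local Notation w := (wweight A).
Local Notation aw x y := (odflt 0 (A x y)).

Lemma wwcons x y s : w (x :: y :: s) = aw x y + w (y :: s).
Proof. by []. Qed.

Lemma wweight_cat x s y t :
  w (x :: s ++ y :: t) = w (x :: s) + aw (last x s) y + w (y :: t).
Proof.
elim: s x => [|z s IH] x; first by rewrite /= add0r.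
rewrite cat_cons !wwcons IH /=.
by rewrite !addrA.
Qed.

Lemma wweight_join x s t :
  w (x :: s ++ t) = w (x :: s) + w (last x s :: t).
Proof.
case: t => [|y t]; first by rewrite cats0 /= addr0.
by rewrite wweight_cat wwcons addrA.
Qed.

Lemma wweight_rot1 x0 s : s != [::] ->
  w (last x0 (rot 1 s) :: rot 1 s) = w (last x0 s :: s).
Proof.
case: s => [//|y s] _; rewrite rot1_cons last_rcons.
rewrite -cats1 wweight_cat wwcons.
case: s => [|z s] /=; first by rewrite !addr0 add0r.
by rewrite addr0 addrC.
Qed.

Lemma wweight_rot x0 s k : (k <= size s)%N ->
  w (last x0 (rot k s) :: rot k s) = w (last x0 s :: s).
Proof.
case: s => [|y s]; first by case: k.
elim: k => [|k IH] hk; first by rewrite rot0.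
rewrite -addn1 addnC rotD // wweight_rot1 ?IH //; first by lia.
by rewrite -size_eq0 size_rot.
Qed.

Lemma cycle_uniq (e : rel 'I_n) x s : is_cycle e (x :: s) -> uniq s.
Proof.
case=> _ H; apply/(uniqP x) => i j hi hj eij.
apply/eqP; apply: contraT => nij.
wlog lij : i j hi hj eij nij / (i < j)%N.
  move=> W; case: (ltngtP i j) => [l|l|l]; first exact: (W i j hi hj eij nij l).
  - by apply: (W j i hj hi (esym eij)) => //; rewrite eq_sym.
  - by rewrite l eqxx in nij.
have := H x i.+1 j.+1; rewrite ltnS lij /wlen /= => /(_ isT hj isT).
by rewrite eij eqxx.
Qed.

Lemma olast_cons (x : 'I_n) s : olast (x :: s) = Some (last x s).
Proof. by rewrite /olast lastI rev_rcons. Qed.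

Lemma uniq_cycle (e : rel 'I_n) x s :
  uniq s -> last x s = x -> path e x s -> s != [::] -> is_cycle e (x :: s).
Proof.
move=> us ls ps ns; split.
  by rewrite /is_closed_walk /= ps /wlen /= lt0n size_eq0 ns olast_cons ls /=.
move=> x0 a b lab; rewrite /wlen /= => hb hne.
case: b lab hb hne => [//|b] lab hb hne /=.
have lastx : x = nth x0 s (size s).-1.
  by rewrite nth_last; case: s ns ls {us ps hb hne} => [//|y s] _ /= ->.
have hs : (0 < size s)%N by rewrite lt0n size_eq0.
case: a lab hne => [|a] lab hne /=.
  have hb' : b.+1 != size s by move: hne; rewrite xpair_eqE eqxx.
  by rewrite lastx nth_uniq //; lia.
rewrite nth_uniq //; first by rewrite neq_ltn -ltnS lab.
by apply: ltn_trans hb; rewrite -ltnS.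
Qed.

Lemma path_suffix (r : rel 'I_n) x s y t : path r x (s ++ y :: t) -> path r y t.
Proof. by rewrite cat_path => /andP[_] /= /andP[]. Qed.

Lemma path_prefix (r : rel 'I_n) x s t : path r x (s ++ t) -> path r x s.
Proof. by rewrite cat_path => /andP[]. Qed.

Lemma walk_suffix (r : rel 'I_n) s y t : is_walk r (s ++ y :: t) -> path r y t.
Proof. by case: s => [//|p s] /=; apply: path_suffix. Qed.

Lemma last_ne (x y : 'I_n) t : t != [::] -> last x t = last y t.
Proof. by case: t. Qed.

End Aux.

Lemma first_diff (T : eqType) (x0 : T) (t u : seq T) :
  size t = size u -> t != u ->
  exists m, [/\ (m < size t)%N, take m t = take m u & nth x0 t m != nth x0 u m].
Proof.
elim: t u => [|x t IH] [|y u] //= [hs]; rewrite eqseq_cons.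
case: (eqVneq x y) => [->|nxy] /= htu.
  have [m [h1 h2 h3]] := IH u hs htu.
  by exists m.+1; rewrite /= h2.
by exists 0%N; rewrite !take0.
Qed.

Lemma arith1 k j m : (k < j)%N -> (j < m)%N ->
  [/\ (2 <= k + (m.+1 - j.+1).+1)%N, (k + (m.+1 - j.+1).+1 < m.+1)%N &
      (k + (m.+1 - j.+1).+1 + (k + ((j - k).-1 + (m.+1 - k.+1).+1).+1) = 2 * m.+1)%N].
Proof. move=> *; rewrite -subn1; split; lia. Qed.

Lemma pick_a g N l : (1 < g)%N -> coprime g N ->
  exists a, [/\ (0 < a)%N, (a <= g)%N & (g %| l + a * N)%N].
Proof.
move=> hg hc.
have [a0 _ hd] := Bezoutl N (ltnW hg).
rewrite (eqP hc) in hd.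
set r := (l * a0 %% g)%N.
exists (if r == 0%N then g else r); split.
- by case: (eqVneq r 0%N) => [_|hr] /=; [lia | rewrite lt0n].
- case: (eqVneq r 0%N) => [_|hr] //=; apply: ltnW; rewrite /r ltn_mod; lia.
have hm : (if r == 0%N then g else r) = l * a0 %[mod g].
  case: (eqVneq r 0%N) => [hr|_] /=; first by rewrite modnn -/r hr.
  by rewrite modn_mod.
rewrite /dvdn -modnDmr -modnMml hm modnMml modnDmr.
have -> : (l + l * a0 * N = l * (1 + a0 * N))%N by rewrite mulnDr muln1 mulnA.
by rewrite -/(dvdn g _) dvdn_mull.
Qed.

Lemma arith2 g N l L2 a : (2 <= l)%N -> (l < N)%N -> (l + L2 = 2 * N)%N -> (1 < g)%N -> (a <= g)%N ->
  (g * N <= l + a * N)%N -> (g * N <= L2 + (2 * g - 2 - a) * N)%N -> False.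
Proof.
move=> h1 h2 h3 hg h4 h5 h6.
have e1 : ((2 * g - 2 - a) * N + a * N + 2 * N = 2 * (g * N))%N.
  rewrite -!mulnDl mulnA; congr (_ * _)%N; lia.
have eq : (l + a * N = g * N)%N by lia.
have : (a * N < g * N)%N by lia.
rewrite ltn_pmul2r; last by lia.
move=> ag.
have : (g * N = a * N + (g - a) * N)%N by rewrite -mulnDl subnKC // ltnW.
have : (1 <= g - a)%N by lia.
move=> h7 h8.
have : (N <= (g - a) * N)%N by rewrite leq_pmull.
lia.
Qed.

Lemma arith3 g N l L2 a : (l + L2 = 2 * N)%N -> (a <= g)%N -> (1 < g)%N ->
  (L2 + (2 * g - 2 - a) * N = g * (2 * N) - (l + a * N))%N.
Proof.
move=> h1 h2 h3.
have e1 : ((2 * g - 2 - a) * N + a * N + 2 * N = g * (2 * N))%N.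
  rewrite -!mulnDl mulnCA mulnA; congr (_ * _)%N; lia.
have gen : forall X Y Z : nat, (X + Y + 2 * N = Z)%N -> (L2 + X = Z - (l + Y))%N by move=> *; lia.
exact: gen e1.
Qed.

Lemma arith4 g a : (a <= g)%N -> (1 < g)%N -> (a + (2 * g - 2 - a) + 2 = g + g)%N.
Proof. move=> *; lia. Qed.


Section Main.
Variable R : realFieldType.
Variable m : nat.
Local Notation N := m.+1.
Variable A : mpmx R N.
Variables (g : nat) (Z0 W0 : seq 'I_N).
Hypothesis hmc : forall c, is_cycle (arcA A) c -> cmean A c <= 0.
Hypothesis hg : (2 <= g)%N.
Hypothesis hgn : (g <= N)%N.
Hypothesis hZ : forall x : 'I_N, (x \in Z0) = (x < g)%N.
Hypothesis hTO : twice_optimal A g Z0 W0.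
Hypothesis hWv : map val W0 = iota g (N - g) ++ flatten (nseq g (iota 0 N)).

Local Notation e := (enum 'I_N).
Local Notation z := (@ord_max m).
Local Notation o := (@ord0 m).
Local Notation w := (wweight A).
Local Notation arc := (arcA A).
Definition Kt a := flatten (nseq a e).
Local Notation wK := (w (z :: e)).

Lemma e_size : size e = N. Proof. by rewrite size_enum_ord. Qed.

Lemma e_last x : last x e = z.
Proof.
apply: val_inj; rewrite -(nth_last x) e_size /= nth_enum_ord //.
Qed.

Lemma e_cons : e = o :: behead e.
Proof.
case E: e => [|y s]; first by have := e_size; rewrite E.
congr (_ :: _); apply: val_inj.
by have := nth_enum_ord o (ltn0Sn m); rewrite E /=.
Qed.

Lemma e_nth i (hi : (i < N)%N) : nth o e i = Ordinal hi.
Proof. by apply: val_inj; rewrite /= nth_enum_ord. Qed.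

Lemma W0_split : W0 = take (N - g) W0 ++ Kt g.
Proof.
rewrite -{1}(cat_take_drop (N - g) W0); congr (_ ++ _).
apply: (inj_map val_inj); rewrite map_drop hWv drop_size_cat ?size_iota //.
by rewrite /Kt map_flatten map_nseq val_enum_ord.
Qed.

Lemma P_val : map val (take (N - g) W0) = iota g (N - g).
Proof. by rewrite map_take hWv take_size_cat ?size_iota. Qed.

Lemma W0_walk : is_walk arc W0.
Proof. by case: hTO. Qed.

Lemma path_e : path arc z e.
Proof.
have := W0_walk; rewrite W0_split /Kt.
case: g hg => [|[|g']] // _.
rewrite /= => H.
have {}H := walk_suffix (eq_ind _ (fun x => is_walk arc (_ ++ x ++ _)) H _ e_cons).
move: H; rewrite cat_path => /andP[_]; rewrite cat_path => /andP[h2 _].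
by move: h2; rewrite -[last o _]/(last o (o :: behead e)) -e_cons e_last.
Qed.

Lemma Kcyc : is_cycle arc (z :: e).
Proof. by apply: uniq_cycle; rewrite ?enum_uniq ?e_last ?path_e // e_cons. Qed.

Lemma wK_le0 : wK <= 0.
Proof.
have := hmc Kcyc; rewrite /cmean /wlen /= e_size ler_pdivrMr ?ltr0n //.
by rewrite mul0r.
Qed.

Lemma Kt_S a : Kt a.+1 = e ++ Kt a. Proof. by []. Qed.

Lemma Kt_props a :
  [/\ path arc z (Kt a), last z (Kt a) = z, size (Kt a) = (a * N)%N
    & w (z :: Kt a) = wK *+ a].
Proof.
elim: a => [|a [h1 h2 h3 h4]]; first by rewrite /= mulr0n.
rewrite Kt_S cat_path last_cat size_cat e_last path_e h1 h2 h3 wweight_join.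
by rewrite e_last h4 e_size mulrS mulSn; split.
Qed.

Lemma Kt_o a : (0 < a)%N -> o \in Kt a.
Proof. by case: a => // a _; rewrite Kt_S mem_cat mem_enum. Qed.

Lemma oZ : o \in Z0.
Proof. by rewrite hZ /=; lia. Qed.

Lemma be_last : last o (behead e) = z.
Proof. by rewrite -(e_last o) [in RHS]e_cons. Qed.

Lemma w_e : w e = w (o :: behead e). Proof. by rewrite -e_cons. Qed.

Lemma gN_false : g = N -> False.
Proof.
move=> gN.
have HW : W0 = o :: (behead e ++ Kt g.-1).
  rewrite W0_split gN subnn take0 /=.
  by case: (g) gN hg => [|g'] // _ _; rewrite Kt_S {1}e_cons.
case: hTO => hwalk _ h3 h4.
have [k1 k2 k3 k4] := Kt_props g.-1.
have ewalk : is_walk arc e by rewrite e_cons /=; move: path_e; rewrite {1}e_cons /= => /andP[].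
have hh : ohead e = ohead W0 by rewrite HW e_cons.
have hl : olast e = olast W0 by rewrite HW e_cons !olast_cons last_cat be_last k2.
have ht : through Z0 e by apply/hasP; exists o; rewrite ?mem_enum ?oZ.
have hwW : w W0 = w e + wK *+ g.-1 by rewrite HW wweight_join be_last k4 w_e.
have hlen : wlen W0 = (N + g.-1 * N).-1 by rewrite HW /wlen /= size_cat k3 size_behead e_size.
have hmod : wlen e = wlen W0 %[mod g].
  rewrite hlen /wlen e_size.
  have -> : (N + g.-1 * N).-1 = (g.-1 * g + N.-1)%N by rewrite gN /=; lia.
  by rewrite modnMDl.
have hle := h3 e ewalk hh hl ht hmod.
have heq : w e = w W0.
  apply/le_anti; rewrite hle hwW /= -[X in _ <= X]addr0 lerD2l.
  by rewrite -(mulr0n wK); apply: (ler_wnMn2l wK_le0).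
have := h4 e ewalk hh hl ht hmod heq.
rewrite hlen /wlen e_size /=.
have : (1 <= g.-1)%N by lia.
by nia.
Qed.

Lemma P_struct : (g < N)%N ->
  exists p P', [/\ W0 = p :: P' ++ Kt g, last p P' = z & path arc p P'].
Proof.
move=> hlt.
have hsz : size (take (N - g) W0) = (N - g)%N by rewrite -(size_map val) P_val size_iota.
have hv := P_val.
case E: (take (N - g) W0) hsz hv => [|p P'] hsz hv; first by move: hsz => /= ; lia.
have HW : W0 = p :: P' ++ Kt g by rewrite W0_split E.
exists p, P'; split => //.
  apply: val_inj; rewrite /= -[last p P']/(last p (p :: P')) -(last_map val) hv.
  by rewrite -(nth_last (val p)) size_iota nth_iota /=; lia.
by have := W0_walk; rewrite HW /= => /path_prefix.
Qed.

Lemma opt_lemma p P' : W0 = p :: P' ++ Kt g -> last p P' = z -> path arc p P' ->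
  forall u, path arc z u -> last z u = z -> has (fun x => x \in Z0) u ->
  (g %| size u)%N ->
  w (z :: u) <= wK *+ g /\ (wK *+ g <= w (z :: u) -> (g * N <= size u)%N).
Proof.
move=> HW hl hp u pu lu hu du.
have [k1 k2 k3 k4] := Kt_props g.
case: hTO => _ _ h3 h4.
set V := p :: P' ++ u.
have vw : is_walk arc V by rewrite /V /= cat_path hp hl pu.
have vh : ohead V = ohead W0 by rewrite HW.
have vl : olast V = olast W0 by rewrite HW /V !olast_cons !last_cat hl lu k2.
have vt : through Z0 V by rewrite /through /V /= has_cat hu !orbT.
have vm : wlen V = wlen W0 %[mod g].
  rewrite HW /V /wlen /= !size_cat k3 -(divnK du) [(g * N)%N]mulnC.
  by rewrite !(addnC (size P')) !modnMDl.
have vwt : w V = w (p :: P') + w (z :: u) by rewrite /V wweight_join hl.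
have Wwt : w W0 = w (p :: P') + wK *+ g by rewrite HW wweight_join hl k4.
have hle := h3 V vw vh vl vt vm.
split; first by move: hle; rewrite vwt Wwt lerD2l.
move=> hge; have heq : w V = w W0.
  by apply/le_anti; rewrite hle vwt Wwt lerD2l hge.
have := h4 V vw vh vl vt vm heq.
by rewrite HW /V /wlen /= !size_cat k3 leq_add2l mulnC.
Qed.

Lemma coprime_gN p P' : W0 = p :: P' ++ Kt g -> last p P' = z -> path arc p P' ->
  coprime g N.
Proof.
move=> HW hl hp.
have hopt := opt_lemma HW hl hp.
set d := gcdn g N.
have dpos : (0 < d)%N by rewrite gcdn_gt0; apply/orP; right.
have dg : (d %| g)%N := dvdn_gcdl g N.
have dN : (d %| N)%N := dvdn_gcdr g N.
set q := (g %/ d)%N.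
have gq : g = (q * d)%N by rewrite divnK.
have qpos : (0 < q)%N by rewrite divn_gt0 // dvdn_leq //; lia.
have [k1 k2 k3 k4] := Kt_props q.
have hdiv : (g %| size (Kt q))%N.
  by rewrite k3 {1}gq dvdn_pmul2l.
have hhas : has (fun x => x \in Z0) (Kt q) by apply/hasP; exists o; rewrite ?Kt_o ?oZ.
have [_ h2] := hopt _ k1 k2 hhas hdiv.
have : (g * N <= size (Kt q))%N.
  apply: h2; rewrite k4; apply: (ler_wnMn2l wK_le0).
  by rewrite /q leq_div.
rewrite k3 leq_pmul2r // => hgq.
rewrite /coprime -/d; apply/eqP.
case: (ltngtP d 1) => // hd; first by lia.
have := ltn_Pdiv hd (ltnW hg); rewrite -/q; lia.
Qed.

Lemma core p P' : W0 = p :: P' ++ Kt g -> last p P' = z -> path arc p P' ->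
  forall t, uniq t -> size t = N -> last z t = z -> path arc z t -> o \in t ->
  t != e -> wK <= w (z :: t) -> False.
Proof.
move=> HW hl hp t ut st lt pt ot tne hwt.
have hopt := opt_lemma HW hl hp.
have hcop := coprime_gN HW hl hp.
have [k [hk htake hnth]] := first_diff o (etrans st (esym e_size)) tne.
rewrite st in hk.
have tlast : nth o t m = z.
  have := nth_last o t; rewrite st /= => ->.
  by rewrite (last_ne _ z) // -size_eq0 st.
have elast : nth o e m = z.
  by have := nth_last o e; rewrite e_size /= => ->; apply: e_last.
have hkm : (k < m)%N.
  rewrite ltn_neqAle -ltnS hk andbT; apply/eqP => km.
  by move: hnth; rewrite km tlast elast eqxx.
set j := nth o t k.
have ht : t = take k e ++ j :: drop k.+1 t.
  by rewrite -htake /j -drop_nth ?st // cat_take_drop.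
have jnot : j \notin take k e.
  apply/negP => jin; move: ut; rewrite ht cat_uniq => /and3P[_ /hasPn H _].
  by have := H j (mem_head _ _); rewrite jin.
have jk : (k < j)%N.
  rewrite ltn_neqAle; apply/andP; split.
    apply/eqP => kj; move: hnth; rewrite -/j (e_nth hk).
    by move/eqP; apply; apply: val_inj => /=; rewrite kj.
  rewrite leqNgt; apply/negP => jk; move: jnot; apply/negP/negPn.
  have -> : j = nth o (take k e) j.
    by rewrite nth_take // (e_nth (ltn_ord j)); apply: val_inj.
  by apply: mem_nth; rewrite size_take e_size hk.
have jm : (j < m)%N.
  rewrite ltn_neqAle -ltnS ltn_ord andbT; apply/eqP => jmv.
  have jz : j = z by apply: val_inj; rewrite /= jmv.
  move: jz; rewrite /j -tlast => /eqP; rewrite nth_uniq ?st //; lia.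
set a' := take k e.
set D' := drop j.+1 e.
set E' := drop k.+1 t.
have hdk : size (drop k e) = (N - k)%N by rewrite size_drop e_size.
have hB : size (take (j - k) (drop k e)) = (j - k)%N.
  by rewrite size_take hdk; case: ltnP => //; lia.
case EB : (take (j - k) (drop k e)) hB => [|b0 B'] hB; first by move: hB => /=; lia.
have he : e = a' ++ b0 :: B' ++ j :: D'.
  rewrite -cat_cons -EB -[in LHS](cat_take_drop k e) /a'; congr (_ ++ _).
  rewrite -[in LHS](cat_take_drop (j - k) (drop k e)); congr (_ ++ _).
  rewrite drop_drop subnK ?(ltnW jk) // /D' (drop_nth o) ?e_size ?ltn_ord //.
  by congr (_ :: _); rewrite (e_nth (ltn_ord j)); apply: val_inj.
move: path_e; rewrite {1}he cat_path => /andP[pA]; rewrite /= => /andP[aAb].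
rewrite cat_path => /andP[pB] /= /andP[aBj pD].
move: pt; rewrite ht cat_path => /andP[_] /= /andP[aAj pE].
set u1 := a' ++ j :: D'.
set u2 := a' ++ b0 :: B' ++ j :: E'.
have pu1 : path arc z u1 by rewrite /u1 cat_path pA /= aAj pD.
have pu2 : path arc z u2 by rewrite /u2 cat_path pA /= aAb cat_path pB /= aBj pE.
have leD : last j D' = z.
  by rewrite -(e_last z) [in RHS]he last_cat /= last_cat.
have leE : last j E' = z by rewrite -lt [in RHS]ht last_cat.
have lu1 : last z u1 = z by rewrite /u1 last_cat.
have lu2 : last z u2 = z by rewrite /u2 last_cat /= last_cat.
have hwsum : w (z :: u1) + w (z :: u2) = wK + w (z :: t).
  rewrite /u1 /u2 [in RHS]he [in RHS]ht !wweight_cat.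
  rewrite -/a' -/E'; ring.
have sa' : size a' = k by rewrite /a' size_take e_size hk.
have sD' : size D' = (N - j.+1)%N by rewrite /D' size_drop e_size.
have sE' : size E' = (N - k.+1)%N by rewrite /E' size_drop st.
have sB' : size B' = (j - k).-1 by rewrite -hB.
have su1 : size u1 = (k + (N - j.+1).+1)%N by rewrite /u1 size_cat /= sa' sD'.
have su2 : size u2 = (k + ((j - k).-1 + (N - k.+1).+1).+1)%N.
  by rewrite /u2 size_cat /= size_cat /= sa' sB' sE'.
have ou2 : o \in u2.
  move: ot; rewrite ht /u2 !mem_cat !in_cons mem_cat !in_cons.
  by case/orP => [->|/orP[->|->]]; rewrite ?orbT.
have [ha1 ha2 ha3] := arith1 jk jm.
rewrite -su1 -su2 in ha1 ha2 ha3.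
have [a [a0 ag adv]] := pick_a (size u1) hg hcop.
set a2 := (2 * g - 2 - a)%N.
have [q1 q2 q3 q4] := Kt_props a.
have [r1 r2 r3 r4] := Kt_props a2.
set v1 := u1 ++ Kt a.
set v2 := u2 ++ Kt a2.
have pv1 : path arc z v1 by rewrite cat_path pu1 lu1 q1.
have pv2 : path arc z v2 by rewrite cat_path pu2 lu2 r1.
have lv1 : last z v1 = z by rewrite last_cat lu1 q2.
have lv2 : last z v2 = z by rewrite last_cat lu2 r2.
have hv1 : has (fun x => x \in Z0) v1.
  by apply/hasP; exists o; [rewrite mem_cat Kt_o ?orbT | exact: oZ].
have hv2 : has (fun x => x \in Z0) v2.
  by apply/hasP; exists o; [rewrite mem_cat ou2 | exact: oZ].
have sv1 : size v1 = (size u1 + a * N)%N by rewrite size_cat q3.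
have sv2 : size v2 = (size u2 + a2 * N)%N by rewrite size_cat r3.
have dv1 : (g %| size v1)%N by rewrite sv1.
have dv2 : (g %| size v2)%N.
  rewrite sv2 /a2 (arith3 ha3 ag hg) dvdn_sub //.
  by rewrite dvdn_mulr.
have wv1 : w (z :: v1) = w (z :: u1) + wK *+ a by rewrite wweight_join lu1 q4.
have wv2 : w (z :: v2) = w (z :: u2) + wK *+ a2 by rewrite wweight_join lu2 r4.
have [o1 o1'] := hopt v1 pv1 lv1 hv1 dv1.
have [o2 o2'] := hopt v2 pv2 lv2 hv2 dv2.
have hs : wK *+ a + wK *+ a2 + (wK + wK) = wK *+ g + wK *+ g.
  rewrite -mulr2n -!mulrnDr; congr (_ *+ _); exact: arith4.
have ge1 : wK *+ g <= w (z :: v1).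
  move: o2 wv1 wv2 hwsum hwt hs.
  generalize (w (z :: v1)) (w (z :: v2)) (w (z :: u1)) (w (z :: u2)) (w (z :: t)) (wK *+ a) (wK *+ a2) (wK *+ g) wK.
  by move=> *; lra.
have ge2 : wK *+ g <= w (z :: v2).
  move: o1 wv1 wv2 hwsum hwt hs.
  generalize (w (z :: v1)) (w (z :: v2)) (w (z :: u1)) (w (z :: u2)) (w (z :: t)) (wK *+ a) (wK *+ a2) (wK *+ g) wK.
  by move=> *; lra.
have := o1' ge1; have := o2' ge2; rewrite sv1 sv2 => h2 h1.
exact: (arith2 ha1 ha2 ha3 hg ag h1 h2).
Qed.

Lemma main_result (H0 : seq 'I_N) : map val H0 = rcons (iota 0 N) 0%N ->
  is_hamiltonian A H0 /\
  (forall c, is_hamiltonian A c ->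
     w c <= w H0 /\ (w c = w H0 -> same_cycle c H0)).
Proof.
move=> hH0.
have hlt : (g < N)%N by rewrite ltn_neqAle hgn andbT; apply/eqP => /gN_false.
have [p [P' [HW hl hp]]] := P_struct hlt.
set be := behead e.
have H0e : H0 = o :: rcons be o.
  apply: (inj_map val_inj); rewrite hH0 -val_enum_ord -[0%N]/(val o) -map_rcons.
  by rewrite /be -rcons_cons -e_cons.
have hrot : rot 1 e = rcons be o by rewrite /be {1}e_cons rot1_cons.
have hne : e != [::] by rewrite e_cons.
have wH0 : w H0 = wK.
  have := wweight_rot1 A o hne; rewrite hrot last_rcons e_last => <-.
  by rewrite H0e.
have pbe : path arc o be.
  by move: path_e; rewrite {1}e_cons /= => /andP[].
have az : arc z o by move: path_e; rewrite {1}e_cons /= => /andP[].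
have hham : is_hamiltonian A H0.
  split; last by move=> x; rewrite H0e -rcons_cons -/be -e_cons mem_rcons in_cons mem_enum orbT.
  rewrite H0e; apply: uniq_cycle.
  - by rewrite -hrot rot_uniq enum_uniq.
  - by rewrite last_rcons.
  - by rewrite rcons_path pbe /be be_last.
  - by case: (be).
split => // c [[cw hcyc] hall].
case: c cw hcyc hall => [|x s]; first by rewrite /is_closed_walk.
move=> cw hcyc hall.
have us := cycle_uniq (conj cw hcyc).
move: cw; rewrite /is_closed_walk /= olast_cons /wlen /= => /andP[/andP[ps sp] /eqP[ls]].
have ls' : last x s = x by rewrite -ls.
have sne : s != [::] by rewrite -size_eq0 -lt0n.
have hins : forall y, y \in s.
  move=> y; have := hall y; rewrite in_cons => /orP[/eqP ->|//].
  by case: (s) ls' sne => [//|y0 s'] /= <- _; apply: mem_last.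
have pe : perm_eq s e.
  by apply: uniq_perm => //; [exact: enum_uniq | move=> y; rewrite hins mem_enum].
have ss : size s = N by rewrite (perm_size pe) e_size.
have zs : z \in s := hins z.
set k := (index z s).+1.
have hk : (k <= size s)%N by rewrite /k index_mem.
set t := rot k s.
have lt : last z t = z.
  rewrite /t /rot /k (take_nth z) ?index_mem // nth_index // last_cat.
  by rewrite last_rcons.
have ut : uniq t by rewrite rot_uniq.
have st : size t = N by rewrite size_rot.
have cs : cycle arc s by rewrite (cycle_path x) ls'.
have pt : path arc z t by have := cs; rewrite -(rot_cycle k) (cycle_path z) lt.
have ot : o \in t by rewrite mem_rot.
have wt : w (z :: t) = w (x :: s).
  have := wweight_rot A x hk; rewrite -/t (last_ne x z) ?lt ?ls' //.
  by rewrite -size_eq0 st.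
change (w (x :: s) <= w H0 /\ (w (x :: s) = w H0 -> same_cycle (x :: s) H0)).
case: (eqVneq t e) => [te|tne].
  rewrite wH0 -wt te; split => // _.
  rewrite H0e /same_cycle /=; rewrite -hrot -te /t.
  case: (ltngtP k (size s)) hk => // hk' _.
    by exists (1 + k)%N; rewrite rotD // add1n.
  by exists 1%N; rewrite hk' rot_size.
have hlt' : w (x :: s) < w H0.
  rewrite wH0 ltNge; apply/negP => hge.
  by apply: (core HW hl hp ut st lt pt ot tne); rewrite wt.
by split; [apply: ltW | move=> heq; move: hlt'; rewrite heq ltxx].
Qed.
End Main.

Lemma gcrit_le (R : realFieldType) n (A : mpmx R n) : (gcrit A <= n)%N.
Proof.
rewrite /gcrit; apply: (big_ind (fun x => x <= n)%N) => //.
  by move=> x y hx hy; rewrite geq_max hx hy.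
move=> i _; rewrite /comp_min_len; apply: (big_ind (fun x => x <= n)%N) => //.
  by move=> x y hx _; rewrite geq_min hx.
by move=> k _; rewrite -ltnS ltn_ord.
Qed.

End Aux.
Import Aux.

Theorem corollaryc (R : realFieldType) (n : nat) (A : mpmx R n) (g : nat)
    (Z0 W0 : seq 'I_n) :
  max_cycle_mean_is A 0 ->
  g = gcrit A ->
  (2 <= g)%N ->
  (n, g) != (2%N, 2%N) ->
  T1_is A (DM g n) ->
  is_cycle (critrel A) Z0 -> wlen Z0 = g ->
  (forall c, is_cycle (critrel A) c -> wlen c = g -> same_cycle c Z0) ->
  interesting A g Z0 W0 ->
  (forall x : 'I_n, (x \in Z0) = (x < g)%N) ->
  map val W0 = iota g (n - g) ++ flatten (nseq g (iota 0 n)) ->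
  forall H0 : seq 'I_n, map val H0 = rcons (iota 0 n) 0%N ->
    is_hamiltonian A H0 /\
    (forall c, is_hamiltonian A c ->
       wweight A c <= wweight A H0 /\
       (wweight A c = wweight A H0 -> same_cycle c H0)).
Proof.
move=> [_ hmc] hgd hg _ _ _ _ _ [hTO _] hZ hWv.
have hgn : (g <= n)%N by rewrite hgd gcrit_le.
clear hgd; move: A Z0 W0 hmc hTO hZ hWv hgn.
case: n => [|m] A Z0 W0 hmc hTO hZ hWv hgn.
  have W0nil : W0 = [::].
    by apply: (inj_map val_inj); rewrite hWv /=; case: (g) => //= k; elim: k.
  by case: hTO; rewrite W0nil.
exact: (main_result hmc hg hgn hZ hTO hWv).
Qed.
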